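(* For positive integers $\ell,m$, let $A(\ell,m)$ be the $(\ell+m)\times(\ell+m)$ coloring matrix with entries $a_{ij}=0$ if $i,j>\ell$ and $a_{ij}=1$ otherwise (i.e., block form with an $\ell\times\ell$ all-ones upper-left block, all-ones off-diagonal blocks, and an $m\times m$ zero lower-right block). Then for all positive integers $\ell,m,n$, $$t_{A(\ell,m)}(n)=\sum_{k=0}^{n-1}\frac{2}{n}\binom{n}{k}\binom{2n-3}{n-k-1}\ell^{n-k}m^k;$$ for $1\le i\le\ell$, $$t_{A(\ell,m)}^{(i)}(n)=\sum_{k=0}^{n-1}\frac{1}{n}\binom{n}{k}\binom{2n-2}{n-k-1}\ell^{n-k-1}m^k;$$ and for $\ell+1\le i\le\ell+m$ and $n\ge2$, $$t_{A(\ell,m)}^{(i)}(n)=\sum_{k=1}^{n-1}\frac{1}{n-1}\binom{n-1}{k-1}\binom{2n-2}{n-k-1}\ell^{n-k}m^{k-1}.$$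
   Context: A plane tree is an unlabeled rooted tree in which the children of every vertex are linearly ordered. A coloring matrix is a square matrix $A=(a_{ij})$ with entries in $\{0,1\}$. An $A$-coloring of a plane tree assigns to each vertex a color (an index of a row of $A$) such that whenever a vertex of color $j$ is a child of a vertex of color $i$, $a_{ij}=1$. Let $t_A(n)$ be the number of pairs (plane tree with $n$ vertices, $A$-coloring of it) and $t_A^{(i)}(n)$ the number of those with root color $i$. Binomial coefficients $\binom{a}{b}$ with $b<0$ or $b>a\ge0$ are $0$. *)

(* Defs.v *)
From mathcomp Require Import all_boot all_order all_algebra.
From Stdlib Require Lists.List.
Set Implicit Arguments. Unset Strict Implicit. Unset Printing Implicit Defensive.
Import Order.TTheory GRing.Theory Num.Theory.

(* A plane tree whose vertices carry colors in 'I_N.  Such an object is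
   exactly a pair (plane tree, assignment of a color to each vertex):
   children are ordered by the list order. *)
Inductive ctree (N : nat) : Type :=
  CNode : 'I_N -> list (ctree N) -> ctree N.

Definition root_color N (t : ctree N) : 'I_N := let: CNode c _ := t in c.

Fixpoint csize N (t : ctree N) : nat :=
  let: CNode _ ts := t in
  ((fix sz (l : list (ctree N)) : nat :=
     match l with nil => 0 | s :: l' => csize s + sz l' end) ts).+1.

(* coloring matrix A (entries 0/1 as booleans): whenever a vertex of color j
   is a child of a vertex of color i, A i j = true. *)
Fixpoint valid N (A : 'M[bool]_N) (t : ctree N) : bool :=
  let: CNode c ts := t in
  (fix vl (l : list (ctree N)) : bool :=
     match l with
     | nil => true
     | s :: l' => [&& A c (root_color s), valid A s & vl l']
     end) ts.

Local Open Scope ring_scope.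
Definition card_is (T : Type) (P : T -> Prop) (k : rat) : Prop :=
  exists s : list T, Stdlib.Lists.List.NoDup s /\ (forall x, Stdlib.Lists.List.In x s <-> P x)
                     /\ (size s)%:R = k.

Definition tA_is N (A : 'M[bool]_N) (n : nat) (k : rat) : Prop :=
  card_is (fun t : ctree N => csize t = n /\ valid A t) k.

Definition tAi_is N (A : 'M[bool]_N) (i : 'I_N) (n : nat) (k : rat) : Prop :=
  card_is (fun t : ctree N => [/\ csize t = n, valid A t & root_color t = i]) k.

(* A(l,m), with 0-based indices: entry (i,j) is 0 iff i >= l and j >= l. *)
Definition Alm (l m : nat) : 'M[bool]_(l + m) :=
  \matrix_(i, j) ~~ ((l <= i)%N && (l <= j)%N).

(* Main.v *)
Require Import Defs.
From mathcomp Require Import all_boot all_order all_algebra.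
Import Order.TTheory GRing.Theory Num.Theory.
From HB Require Import structures.
From mathcomp Require Import zify ring.
Set Implicit Arguments. Unset Strict Implicit. Unset Printing Implicit Defensive.

Section Enum.
Variable N : nat.
Implicit Types (t : ctree N) (ts : seq (ctree N)).

Fixpoint ctree_ind' (P : ctree N -> Prop)
  (H : forall c ts, (forall t, List.In t ts -> P t) -> P (CNode c ts)) t : P t :=
  match t with CNode c ts => H c ts
    ((fix F (ts : list (ctree N)) : forall t, List.In t ts -> P t :=
       match ts with
       | nil => fun t (i : List.In t nil) => False_ind _ i
       | s :: ts' => fun t (i : List.In t (s :: ts')) =>
           match i with
           | or_introl e => eq_ind s P (ctree_ind' H s) t e
           | or_intror i' => F ts' t i'
           end
       end) ts)
  end.

Fixpoint enc t : GenTree.tree 'I_N :=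
  let: CNode c ts := t in GenTree.Node 0 (GenTree.Leaf c :: map enc ts).
Fixpoint dec (x : GenTree.tree 'I_N) : option (ctree N) :=
  match x with
  | GenTree.Node _ (GenTree.Leaf c :: rest) => Some (CNode c (pmap dec rest))
  | _ => None
  end.
Lemma encK : pcancel enc dec.
Proof.
elim/ctree_ind' => c ts IH /=; congr (Some (CNode c _)).
elim: ts IH => [|s ts IHts] IH //=.
by rewrite IH /=; [rewrite IHts // => t it; apply: IH; right | left].
Qed.
End Enum.

HB.instance Definition _ N := Countable.copy (ctree N) (pcan_type (@encK N)).

Lemma csizeE N c (ts : seq (ctree N)) : csize (CNode c ts) = (sumn (map (@csize N) ts)).+1.
Proof. by congr S; elim: ts => //= s ts ->. Qed.

Lemma validE N (A : 'M[bool]_N) c (ts : seq (ctree N)) :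
  valid A (CNode c ts) = all (fun s => A c (root_color s) && valid A s) ts.
Proof. by elim: ts => //= s ts ->; rewrite andbA. Qed.

Lemma csize_gt0 N (t : ctree N) : (0 < csize t)%N.
Proof. by case: t => c ts; rewrite csizeE. Qed.


Lemma uniq_flatten_map (T U : eqType) (f : T -> seq U) (s : seq T) :
  uniq s -> (forall x, x \in s -> uniq (f x)) ->
  (forall x y u, x \in s -> y \in s -> u \in f x -> u \in f y -> x = y) ->
  uniq (flatten (map f s)).
Proof.
elim: s => //= x s IH /andP[xs us] Hu Hd.
rewrite cat_uniq Hu ?mem_head //= IH //; last first.
- by move=> a b u ia ib; apply: Hd; rewrite inE ?ia ?ib orbT.
- by move=> a ia; apply: Hu; rewrite inE ia orbT.
rewrite andbT; apply/hasP => -[u /flatten_mapP [y ys uy] ux].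
have exy : x = y by apply: (Hd x y u); rewrite ?mem_head ?inE ?ys ?orbT.
by move: xs; rewrite exy ys.
Qed.

Section Gen.
Variables (N : nat) (A : 'M[bool]_N).

Fixpoint trees (fuel n : nat) (c : 'I_N) {struct fuel} : seq (ctree N) :=
  match fuel with
  | 0 => [::]
  | fuel'.+1 => if n is n'.+1 then map (CNode c) (forest fuel' n' c) else [::]
  end
with forest (fuel n : nat) (c : 'I_N) {struct fuel} : seq (seq (ctree N)) :=
  match fuel with
  | 0 => [::]
  | fuel'.+1 =>
    if n is n'.+1 then
      flatten [seq flatten [seq [seq t :: ts | t <- trees fuel' k.+1 c', ts <- forest fuel' (n' - k) c]
                           | c' <- [seq c' <- enum 'I_N | A c c']]
              | k <- iota 0 n]
    else [:: [::]]
  end.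

Lemma forestS fuel n c : forest fuel.+1 n.+1 c =
  flatten [seq flatten [seq [seq t :: ts | t <- trees fuel k.+1 c', ts <- forest fuel (n - k) c]
                           | c' <- [seq c' <- enum 'I_N | A c c']]
              | k <- iota 0 n.+1].
Proof. by []. Qed.

Definition okT n c (t : ctree N) := [&& csize t == n, valid A t & root_color t == c].
Definition okF n c (ts : seq (ctree N)) :=
  (sumn (map (@csize N) ts) == n) && all (fun s => A c (root_color s) && valid A s) ts.

Lemma sound fuel : (forall n c t, t \in trees fuel n c -> okT n c t) /\
                   (forall n c ts, ts \in forest fuel n c -> okF n c ts).
Proof.
elim: fuel => [|fuel [HT HF]] //=; split.
- case=> // n c t /mapP [ts tsin ->]; move: (HF _ _ _ tsin).
  by rewrite /okT /okF csizeE validE /= eqxx eqSS andbT => /andP[-> ->].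
- case=> [|n] c ts; first by rewrite inE => /eqP ->.
  move=> /flatten_mapP [k]; rewrite mem_iota add0n => /andP[_ kn].
  move=> /flatten_mapP [c']; rewrite mem_filter => /andP [Acc' _].
  move=> /allpairsP [[t ts'] /= [tin tsin ->]].
  move: (HT _ _ _ tin) (HF _ _ _ tsin) => /and3P[/eqP st vt /eqP rt] /andP[/eqP sts ats].
  rewrite /okF /= st sts rt Acc' vt ats /= andbT.
  by rewrite addSn subnKC.
Qed.

Lemma complete fuel :
  (forall n c t, (2 * n <= fuel)%N -> okT n c t -> t \in trees fuel n c) /\
  (forall n c ts, (2 * n < fuel)%N -> okF n c ts -> ts \in forest fuel n c).
Proof.
elim: fuel => [|fuel [HT HF]].
  split=> [n c t|//]; rewrite leqn0 muln_eq0 /= => /eqP -> /and3P[].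
  by rewrite eqn0Ngt csize_gt0.
split.
- case=> [|n] c [c0 ts] Hn; first by rewrite /okT csizeE.
  rewrite /okT csizeE validE /= eqSS => /and3P[sz va /eqP ec]; subst c0.
  rewrite /= mem_map; last by move=> x y [].
  apply: HF; first lia.
  by rewrite /okF sz va.
- case=> [|n] c ts Hn.
    case: ts => [|t ts] /=; first by rewrite inE.
    by rewrite /okF /= addn_eq0 eqn0Ngt csize_gt0.
  case: ts => [|t ts]; first by rewrite /okF.
  rewrite /okF => /andP[/eqP sz /andP[/andP[At vt] ats]]; rewrite /= in sz.
  set k := (csize t).-1.
  have ek : csize t = k.+1 by rewrite /k prednK // csize_gt0.
  have kn : (k <= n)%N by rewrite -ltnS -ek -sz leq_addr.
  rewrite forestS; apply/flatten_mapP; exists k; first by rewrite mem_iota add0n ltnS kn.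
  apply/flatten_mapP; exists (root_color t); first by rewrite mem_filter At mem_enum.
  apply/allpairsP; exists (t, ts); split => //=.
  + apply: HT; first lia.
    by rewrite /okT ek eqxx vt eqxx.
  + apply: HF; first lia.
    rewrite /okF; apply/andP; split; last exact: ats.
    apply/eqP; lia.
Qed.

Lemma uniqTF fuel : (forall n c, uniq (trees fuel n c)) /\ (forall n c, uniq (forest fuel n c)).
Proof.
elim: fuel => [|fuel [HT HF]] //; split.
- case=> //= n c; rewrite map_inj_uniq //; by move=> x y [].
- case=> // n c; rewrite forestS; apply: uniq_flatten_map; first exact: iota_uniq.
  + move=> k _; apply: uniq_flatten_map; first by rewrite filter_uniq ?enum_uniq.
    * move=> c' _; apply: allpairs_uniq => //.
      by move=> [a b] [a' b'] _ _ /= [-> ->].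
    * move=> c1 c2 u _ _ /allpairsP[[t ts] /= [tin _ ->]] /allpairsP[[t' ts'] /= [tin' _ []]] et _.
      move: ((sound fuel).1 _ _ _ tin) ((sound fuel).1 _ _ _ tin').
      by rewrite /okT et => /and3P[_ _ /eqP <-] /and3P[_ _ /eqP <-].
  + move=> k1 k2 u _ _ /flatten_mapP[c1 _ /allpairsP[[t ts] /= [tin _ ->]]].
    move=> /flatten_mapP[c2 _ /allpairsP[[t' ts'] /= [tin' _ []]]] et _.
    move: ((sound fuel).1 _ _ _ tin) ((sound fuel).1 _ _ _ tin').
    rewrite /okT et => /and3P[/eqP e1 _ _] /and3P[/eqP e2 _ _]; lia.
Qed.

Lemma size_forest fuel n c :
  size (forest fuel.+1 n.+1 c) =
  (\sum_(k < n.+1) \sum_(c' | A c c') size (trees fuel k.+1 c') * size (forest fuel (n - k) c))%N.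
Proof.
rewrite forestS size_flatten /shape -map_comp sumnE big_map (_ : iota 0 n.+1 = index_iota 0 n.+1) // big_mkord.
apply: eq_bigr => k _ /=; rewrite size_flatten /shape -map_comp sumnE big_map big_filter.
by rewrite big_enum_cond /=; apply: eq_bigr => c' _ /=; rewrite size_allpairs.
Qed.

End Gen.


Fixpoint cT (l m fuel n : nat) (b : bool) {struct fuel} : nat :=
  match fuel with
  | 0 => 0
  | fuel'.+1 => if n is n'.+1 then cF l m fuel' n' b else 0
  end
with cF (l m fuel n : nat) (b : bool) {struct fuel} : nat :=
  match fuel with
  | 0 => 0
  | fuel'.+1 => if n is n'.+1 then
       (\sum_(k < n'.+1) (l * cT l m fuel' k.+1 true + (if b then m * cT l m fuel' k.+1 false else 0))
                          * cF l m fuel' (n' - k) b)%N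
       else 1
  end.

Lemma Alm_sum l m c (G : bool -> nat) :
  (\sum_(c' < l + m | Alm l m c c') G (c' < l)%N =
   l * G true + (if (c < l)%N then m * G false else 0))%N.
Proof.
rewrite big_mkcond big_split_ord /=; congr (_ + _).
- rewrite (eq_bigr (fun _ => G true)); first by rewrite sum_nat_const card_ord.
  by move=> i _; rewrite mxE /= (leqNgt l i) (ltn_ord i) andbF.
- case: ltnP => cl.
  + rewrite (eq_bigr (fun _ => G false)); first by rewrite sum_nat_const card_ord.
    move=> i _; rewrite mxE /= leq_addr andbT (leqNgt l c) cl /=.
    by rewrite ltnNge leq_addr.
  + by rewrite big1 // => i _; rewrite mxE /= leq_addr cl.
Qed.

Lemma size_TF l m fuel :
  (forall n (c : 'I_(l + m)), size (trees (Alm l m) fuel n c) = cT l m fuel n (c < l)%N) /\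
  (forall n (c : 'I_(l + m)), size (forest (Alm l m) fuel n c) = cF l m fuel n (c < l)%N).
Proof.
elim: fuel => [|fuel [HT HF]] //; split.
- by case=> // n c /=; rewrite size_map HF.
- case=> // n c; rewrite size_forest /=; apply: eq_bigr => k _.
  rewrite -big_distrl /= HF; congr (_ * _)%N.
  rewrite (eq_bigr (fun c' : 'I_(l+m) => cT l m fuel k.+1 (c' < l)%N)); last by move=> c' _; rewrite HT.
  by rewrite (@Alm_sum l m c (fun b => cT l m fuel k.+1 b)).
Qed.

Lemma cTF_fuel l m fuel :
  (forall fuel' n b, (2 * n <= fuel)%N -> (2 * n <= fuel')%N -> cT l m fuel n b = cT l m fuel' n b) /\
  (forall fuel' n b, (2 * n < fuel)%N -> (2 * n < fuel')%N -> cF l m fuel n b = cF l m fuel' n b).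
Proof.
elim: fuel => [|fuel [HT HF]].
  split=> [[|fuel'] [|n] b //|//]; lia.
split.
- move=> [|fuel'] [|n] b //= h1 h2; try lia.
  apply: HF; lia.
- move=> [|fuel'] [|n] b //= h1 h2; try lia.
  apply: eq_bigr => k _.
  rewrite (HT fuel' k.+1 true) ?(HT fuel' k.+1 false) ?(HF fuel' (n - k)) //; have := ltn_ord k; lia.
Qed.

Local Open Scope ring_scope.

Definition cong (N : nat) (p q : {poly rat}) := forall i, (i < N)%N -> p`_i = q`_i.

Lemma cong_comb N (x y a1 b1 c1 a2 b2 c2 a3 b3 c3 a4 b4 c4 : {poly rat}) :
  cong N a1 b1 -> cong N a2 b2 -> cong N a3 b3 -> cong N a4 b4 ->
  x - y = c1 * (a1 - b1) + c2 * (a2 - b2) + c3 * (a3 - b3) + c4 * (a4 - b4) ->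
  cong N x y.
Proof.
move=> h1 h2 h3 h4 e i iN; apply/eqP; rewrite -subr_eq0 -coefB e !coefD !coefM.
have z : forall (c a b : {poly rat}), cong N a b -> \sum_(j < i.+1) c`_j * (a - b)`_(i - j) = 0.
  move=> c a b h; apply: big1 => j _; rewrite coefB h ?subrr ?mulr0 //.
  by apply: leq_ltn_trans iN; rewrite leq_subr.
by rewrite !z ?addr0.
Qed.

Lemma cong_refl N p : cong N p p. Proof. by []. Qed.

Section Alg.
Variables l m : nat.

Definition fL n : rat := (cT l m (2 * n) n true)%:R.
Definition fM n : rat := (cT l m (2 * n) n false)%:R.
Definition pA n : rat := (cF l m (2 * n).+1 n true)%:R.
Definition pL n : rat := (cF l m (2 * n).+1 n false)%:R.

Lemma fuelT f n b : (2 * n <= f)%N -> cT l m f n b = cT l m (2 * n) n b.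
Proof. by move=> h; apply: (cTF_fuel l m f).1 => //. Qed.
Lemma fuelF f n b : (2 * n < f)%N -> cF l m f n b = cF l m (2 * n).+1 n b.
Proof. by move=> h; apply: (cTF_fuel l m f).2 => //. Qed.

Lemma fL0 : fL 0 = 0. Proof. by []. Qed.
Lemma fM0 : fM 0 = 0. Proof. by []. Qed.
Lemma fLS n : fL n.+1 = pA n.
Proof. by rewrite /fL /pA (_ : 2 * n.+1 = (2 * n).+2)%N //; lia. Qed.
Lemma fMS n : fM n.+1 = pL n.
Proof. by rewrite /fM /pL (_ : 2 * n.+1 = (2 * n).+2)%N //; lia. Qed.
Lemma pA0 : pA 0 = 1. Proof. by []. Qed.
Lemma pL0 : pL 0 = 1. Proof. by []. Qed.

Lemma cF_unfold f n b : cF l m f.+1 n.+1 b =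
  (\sum_(k < n.+1) (l * cT l m f k.+1 true + (if b then m * cT l m f k.+1 false else 0))
     * cF l m f (n - k) b)%N.
Proof. by []. Qed.

Lemma cFS n b : cF l m (2 * n.+1).+1 n.+1 b =
  (\sum_(k < n.+1) (l * cT l m (2 * k.+1) k.+1 true +
     (if b then m * cT l m (2 * k.+1) k.+1 false else 0)) * cF l m (2 * (n - k)).+1 (n - k) b)%N.
Proof.
rewrite (_ : (2 * n.+1).+1 = (2 * n).+3)%N; last lia.
rewrite cF_unfold; apply: eq_bigr => k _; have := ltn_ord k => kn.
by rewrite (@fuelT _ k.+1 true) ?(@fuelT _ k.+1 false) ?(@fuelF _ (n - k)) //; lia.
Qed.

Lemma pAS n : pA n.+1 = \sum_(k < n.+1) (l%:R * fL k.+1 + m%:R * fM k.+1) * pA (n - k)%N.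
Proof.
by rewrite /pA cFS natr_sum; apply: eq_bigr => k _; rewrite natrM natrD !natrM.
Qed.
Lemma pLS n : pL n.+1 = \sum_(k < n.+1) (l%:R * fL k.+1) * pL (n - k)%N.
Proof.
by rewrite /pL cFS natr_sum; apply: eq_bigr => k _; rewrite addn0 !natrM.
Qed.

Variable N : nat.
Definition Fp := \poly_(i < N) fL i.
Definition Gp := \poly_(i < N) fM i.
Definition Pp := \poly_(i < N) pA i.
Definition Qp := \poly_(i < N) pL i.
Definition L := (l%:R : rat)%:P.
Definition M := (m%:R : rat)%:P.

Lemma congF : cong N Fp ('X * Pp).
Proof.
move=> i iN; rewrite coefXM !coef_poly iN; case: i iN => // i iN.
by rewrite fLS /= (ltn_trans _ iN).
Qed.
Lemma congG : cong N Gp ('X * Qp).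
Proof.
move=> i iN; rewrite coefXM !coef_poly iN; case: i iN => // i iN.
by rewrite fMS /= (ltn_trans _ iN).
Qed.

Lemma conv_coef (T P : {poly rat}) (t p : nat -> rat) n :
  (n.+1 < N)%N -> (forall i, (i < N)%N -> T`_i = t i) -> (forall i, (i < N)%N -> P`_i = p i) -> t 0%N = 0 ->
  (T * P)`_n.+1 = \sum_(k < n.+1) t k.+1 * p (n - k)%N.
Proof.
move=> nN hT hP t0; rewrite coefM big_ord_recl hT ?t0 ?mul0r ?add0r; last exact: (leq_ltn_trans (leq0n n.+1) nN).
apply: eq_bigr => k _; have := ltn_ord k => kn; rewrite lift0 subSS hT ?hP //; lia.
Qed.

Lemma congP : cong N Pp (1 + (L * Fp + M * Gp) * Pp).
Proof.
move=> i iN; rewrite coefD coef1 coef_poly iN.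
case: i iN => [|n] nN.
  by rewrite coefM big_ord1 !coefD !coefCM !coef_poly nN /= fL0 fM0 pA0; ring.
rewrite add0r pAS (conv_coef (t := fun i => l%:R * fL i + m%:R * fM i) (p := pA)) //.
- by move=> i iN; rewrite coefD !coefCM !coef_poly iN.
- by move=> i iN; rewrite coef_poly iN.
- by rewrite fL0 fM0 !mulr0 addr0.
Qed.

Lemma congQ : cong N Qp (1 + (L * Fp) * Qp).
Proof.
move=> i iN; rewrite coefD coef1 coef_poly iN.
case: i iN => [|n] nN.
  by rewrite coefM big_ord1 !coefCM !coef_poly nN /= fL0 pL0; ring.
rewrite add0r pLS (conv_coef (t := fun i => l%:R * fL i) (p := pL)) //.
- by move=> i iN; rewrite !coefCM !coef_poly iN.
- by move=> i iN; rewrite coef_poly iN.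
- by rewrite fL0 !mulr0.
Qed.

Definition Wp := Fp * Qp.

Lemma congP2 : cong N Pp (Qp * (1 + M * Wp)).
Proof.
apply: (cong_comb congQ congP congG congF (c1 := - Pp) (c2 := Qp) (c3 := M * Pp * Qp) (c4 := - M * Qp ^+ 2)).
rewrite /Wp; ring.
Qed.

Lemma congW : cong N Wp ('X * (1 + M * Wp) * (1 + L * Wp) ^+ 2).
Proof.
have hF : cong N Fp ('X * (1 + M * Wp) * (1 + L * Wp)).
  apply: (cong_comb congF congP2 congQ (@cong_refl N 0) (c1 := 1) (c2 := 'X) (c3 := 'X * (1 + M * Wp)) (c4 := 0)).
  rewrite /Wp; ring.
apply: (cong_comb hF congQ (@cong_refl N 0) (@cong_refl N 0) (c1 := Qp) (c2 := 'X * (1 + M * Wp) * (1 + L * Wp)) (c3 := 0) (c4 := 0)).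
rewrite /Wp; ring.
Qed.

Lemma congF2 : cong N Fp ('X * (1 + M * Wp) * (1 + L * Wp)).
Proof.
apply: (cong_comb congF congP2 congQ (@cong_refl N 0) (c1 := 1) (c2 := 'X) (c3 := 'X * (1 + M * Wp)) (c4 := 0)).
rewrite /Wp; ring.
Qed.

Lemma congG2 : cong N Gp ('X * (1 + L * Wp)).
Proof.
apply: (cong_comb congG congQ (@cong_refl N 0) (@cong_refl N 0) (c1 := 1) (c2 := 'X) (c3 := 0) (c4 := 0)).
rewrite /Wp; ring.
Qed.

End Alg.


Section CT.
Variables l m : nat.
Definition lr : rat := l%:R.
Definition mr : rat := m%:R.
Definition a1 : rat := mr + 2%:R * lr.
Definition a2 : rat := lr ^+ 2 + 2%:R * lr * mr.
Definition a3 : rat := lr ^+ 2 * mr.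
Definition phi : {poly rat} := 1 + a1%:P * 'X + a2%:P * 'X^2 + a3%:P * 'X^3.
#[global] Arguments lr : simpl never.
#[global] Arguments mr : simpl never.
#[global] Arguments a1 : simpl never.
#[global] Arguments a2 : simpl never.
#[global] Arguments a3 : simpl never.
#[global] Arguments phi : simpl never.
Definition ct n k : rat :=
  if n is 0 then (k == 0)%:R else k%:R / n%:R * ('X^k * phi ^+ n)`_n.

Lemma phi0 : phi`_0 = 1.
Proof. by rewrite /phi !coefD coef1 !coefCM coefX !coefXn /= !mulr0 !addr0. Qed.

Lemma phi_deriv : phi^`() = a1%:P + (2%:R * a2)%:P * 'X + (3%:R * a3)%:P * 'X^2.
Proof.
rewrite /phi !derivE /=; ring.
Qed.

Lemma coefXderiv (p : {poly rat}) i : ('X * p^`())`_i = i%:R * p`_i.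
Proof. by rewrite coefXM coef_deriv; case: i => [|i] //=; rewrite ?mul0r // mulr_natl. Qed.

Lemma XderivXn k : 'X * ('X^k)^`() = k%:R%:P * ('X^k : {poly rat}).
Proof.
rewrite derivXn; case: k => [|k]; first by rewrite mulr0n mulr0 mul0r.
by rewrite mulrnAr -exprS -mulr_natl polyC_natr.
Qed.

Lemma fin_step (K K1 K2 K3 n1 n2 C E D0 D1 D2 D3 b1 b2 b3 : rat) :
  K1 = K + 1 -> K2 = K + 2 -> K3 = K + 3 -> n2 = n1 + 1 -> n1 != 0 -> n2 != 0 ->
  n1 * C = K * C + n2 * E ->
  K * C + E = K * D0 + K1 * b1 * D1 + K2 * b2 * D2 + K3 * b3 * D3 ->
  K1 / n2 * C = K / n1 * D0 + b1 * (K1 / n1 * D1) + b2 * (K2 / n1 * D2) + b3 * (K3 / n1 * D3).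
Proof.
move=> -> -> -> -> h1 h2 hC hQ.
have hE : E = (n1 - K) * C / (n1 + 1).
  apply: (mulfI h2); rewrite mulrBl hC; field; exact: h2.
transitivity ((K * C + E) / n1).
  rewrite hE; field; rewrite ?h1 ?h2 //.
rewrite hQ; field; exact: h1.
Qed.

Lemma ctS n k : ct n.+1 k = k%:R / n.+1%:R * ('X^k * phi ^+ n.+1)`_n.+1.
Proof. by []. Qed.
Lemma ct0 k : ct 0 k = (k == 0)%:R.
Proof. by []. Qed.

Lemma ct_rec n k : (0 < k)%N ->
  ct n.+1 k = ct n k.-1 + a1 * ct n k + a2 * ct n k.+1 + a3 * ct n k.+2.
Proof.
case: k => // k _; rewrite [k.+1.-1]/=.
case: n => [|n].
  rewrite !ctS !ct0 !expr1 !coefXnM.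
  case: k => [|k] /=.
    by rewrite subnn phi0 divr1 !mulr0 !addr0 mulr1.
  by rewrite !mulr0 !addr0.
rewrite !ctS.
have eC : ('X^(k.+1) * phi ^+ n.+2)`_n.+2 = ('X^k * phi ^+ n.+2)`_n.+1.
  by rewrite (exprS 'X) -mulrA coefXM.
have hZ : 'X * ('X^k * phi ^+ n.+2)^`() = k%:R%:P * ('X^k * phi ^+ n.+2)
     + (n.+2)%:R%:P * ('X^(k.+1) * phi ^+ n.+1 * phi^`()).
  rewrite derivM mulrDr mulrA XderivXn deriv_exp -mulr_natl polyC_natr (exprS 'X) [n.+2.-1]/=.
  ring.
have hC : (n.+1)%:R * ('X^k * phi ^+ n.+2)`_n.+1 = k%:R * ('X^k * phi ^+ n.+2)`_n.+1
     + (n.+2)%:R * ('X^(k.+1) * phi ^+ n.+1 * phi^`())`_n.+1.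
  by rewrite -coefXderiv hZ coefD !coefCM.
have hP : k%:R%:P * ('X^k * phi ^+ n.+2) + 'X^(k.+1) * phi ^+ n.+1 * phi^`() =
   k%:R%:P * ('X^k * phi ^+ n.+1) + (k.+1%:R * a1)%:P * ('X^(k.+1) * phi ^+ n.+1)
   + (k.+2%:R * a2)%:P * ('X^(k.+2) * phi ^+ n.+1) + (k.+3%:R * a3)%:P * ('X^(k.+3) * phi ^+ n.+1).
  rewrite phi_deriv (exprS phi) !exprS /phi; ring.
have hQ := congr1 (fun p : {poly rat} => p`_n.+1) hP.
rewrite /= !coefD !coefCM in hQ.
rewrite eC.
apply: (fin_step _ _ _ _ _ _ hC hQ).
- by rewrite -addn1 natrD.
- by rewrite -addn2 natrD.
- by rewrite -addn3 natrD.
- by rewrite -addn1 natrD.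
- by rewrite pnatr_eq0.
- by rewrite pnatr_eq0.
Qed.
End CT.


Section W.
Variables l m N : nat.
Local Notation W := (Wp l m N).

Lemma W0 : W`_0 = 0.
Proof. by rewrite /Wp coef0M /Fp coef_poly fL0; case: (0 < N)%N; rewrite mul0r. Qed.

Lemma Wpow0 k : (W ^+ k)`_0 = (k == 0)%:R.
Proof.
elim: k => [|k IH]; first by rewrite expr0 coef1.
by rewrite exprS coef0M W0 mul0r.
Qed.

Lemma phiW : (1 + M m * W) * (1 + L l * W) ^+ 2 =
  1 + (a1 l m)%:P * W + (a2 l m)%:P * W ^+ 2 + (a3 l m)%:P * W ^+ 3.
Proof. by rewrite /M /L /a1 /a2 /a3 /lr /mr; ring. Qed.

Lemma Mrec n k : (n.+1 < N)%N -> (0 < k)%N ->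
  (W ^+ k)`_n.+1 = (W ^+ k.-1)`_n + a1 l m * (W ^+ k)`_n
     + a2 l m * (W ^+ k.+1)`_n + a3 l m * (W ^+ k.+2)`_n.
Proof.
case: k => // k nN _.
have h : cong N (W ^+ k.+1) ('X * (W ^+ k + (a1 l m)%:P * W ^+ k.+1
            + (a2 l m)%:P * W ^+ k.+2 + (a3 l m)%:P * W ^+ k.+3)).
  refine (cong_comb (@congW l m N) (@cong_refl N 0) (@cong_refl N 0) (@cong_refl N 0)
            (c1 := W ^+ k) (c2 := 0) (c3 := 0) (c4 := 0) _).
  rewrite /M /L /a1 /a2 /a3 /lr /mr !exprS; ring.
by rewrite h // coefXM /= !coefD !coefCM.
Qed.

Lemma Wct n : (n < N)%N -> forall k, (W ^+ k)`_n = ct l m n k.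
Proof.
elim: n => [|n IH] nN k; first by rewrite Wpow0 ct0.
case: k => [|k].
  by rewrite expr0 coef1 ctS mul0r mul0r.
rewrite Mrec // ct_rec // !IH //; exact: ltnW.
Qed.

Lemma fL_ct n : (n.+1 < N)%N -> fL l m n.+1 = (n == 0)%:R + (l + m)%:R * ct l m n 1 + (l * m)%:R * ct l m n 2.
Proof.
move=> nN; rewrite -(Wct (ltnW nN)) -(Wct (ltnW nN)).
have h := @congF2 l m N _ nN; rewrite /Fp coef_poly nN in h; rewrite h -mulrA coefXM /= (_ : (1 + M m * W) * (1 + L l * W) = 1 + ((l + m)%:R)%:P * W + ((l * m)%:R)%:P * W ^+ 2).
  by rewrite !coefD coef1 !coefCM expr1.
by rewrite /M /L natrD natrM; ring.
Qed.

Lemma fM_ct n : (n.+1 < N)%N -> fM l m n.+1 = (n == 0)%:R + l%:R * ct l m n 1.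
Proof.
move=> nN; rewrite -(Wct (ltnW nN)).
have h := @congG2 l m N _ nN; rewrite /Gp coef_poly nN in h; rewrite h.
by rewrite coefXM /= coefD coef1 coefCM expr1.
Qed.
End W.


Lemma coef_lin (c : rat) a i : ((1 + c%:P * 'X) ^+ a)`_i = 'C(a, i)%:R * c ^+ i.
Proof.
elim: a i => [|a IH] i.
  by rewrite expr0 coef1 bin0n; case: i => [|i]; rewrite ?expr0 ?mulr1 ?mul0r.
rewrite exprS mulrDl mul1r coefD -mulrA coefCM coefXM IH.
case: i => [|i]; first by rewrite !bin0 !expr0 mulr0 addr0.
by rewrite /= IH binS natrD exprS; ring.
Qed.

Lemma fin2 (S T TT N1 N2 C1 C2 Y Z LL : rat) : N1 != 0 -> N2 != 0 -> N2 = N1 + 1 -> TT = 2 * T ->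
  N2 * S * C1 + N2 * TT * C2 = N1 * (Y + LL * Z) - N1 * LL * Z ->
  S * (1 / N1 * C1) + T * (2 / N1 * C2) = 1 / N2 * Y.
Proof.
move=> h1 h2 e2 -> h; move: h2 h; rewrite e2 => h2 h.
have e : S * C1 + 2 * T * C2 = N1 * Y / (N1 + 1).
  apply: (mulfI h2); transitivity ((N1 + 1) * S * C1 + (N1 + 1) * (2 * T) * C2); first ring.
  rewrite h; field; exact: h2.
transitivity ((S * C1 + 2 * T * C2) / N1).
  field; exact: h1.
rewrite e; field; rewrite ?h1 ?h2 //.
Qed.

Section Exp.
Variables l m : nat.
Definition Ap : {poly rat} := 1 + (mr m)%:P * 'X.
Definition Bp : {poly rat} := 1 + (lr l)%:P * 'X.

Lemma phiAB : phi l m = Ap * Bp ^+ 2.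
Proof. by rewrite /phi /Ap /Bp /a1 /a2 /a3; ring. Qed.

Lemma phiX n : phi l m ^+ n = Ap ^+ n * Bp ^+ (2 * n).
Proof. by rewrite phiAB exprMn -exprM mulnC. Qed.

Lemma coefAB a b j : (Ap ^+ a * Bp ^+ b)`_j =
  \sum_(i < j.+1) ('C(a, i)%:R * mr m ^+ i) * ('C(b, j - i)%:R * lr l ^+ (j - i)).
Proof. by rewrite coefM; apply: eq_bigr => i _; rewrite !coef_lin. Qed.

Lemma ct1 n : ct l m n.+1 1 = 1 / n.+1%:R * (Ap ^+ n.+1 * Bp ^+ (2 * n.+1))`_n.
Proof. by rewrite ctS expr1 coefXM /= phiX. Qed.

Lemma fZ n : ((l + m)%:R * ct l m n.+1 1 + (l * m)%:R * ct l m n.+1 2) =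
   1 / n.+2%:R * (Ap ^+ n.+2 * Bp ^+ (2 * n.+1))`_n.+1.
Proof.
rewrite !ctS !phiX.
have ZY : Ap ^+ n.+2 * Bp ^+ (2 * n.+1).+1 = Ap ^+ n.+2 * Bp ^+ (2 * n.+1) + (lr l)%:P * ('X * (Ap ^+ n.+2 * Bp ^+ (2 * n.+1))).
  by rewrite [Bp ^+ (2 * n.+1).+1]exprS /Bp; ring.
have key : (n.+2%:R * (l + m)%:R)%:P * ('X * (Ap ^+ n.+1 * Bp ^+ (2 * n.+1)))
   + (n.+2%:R * (2 * l * m)%:R)%:P * ('X^2 * (Ap ^+ n.+1 * Bp ^+ (2 * n.+1)))
   = 'X * (Ap ^+ n.+2 * Bp ^+ (2 * n.+1).+1)^`()
     - (n.+1%:R * lr l)%:P * ('X * (Ap ^+ n.+2 * Bp ^+ (2 * n.+1))).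
  rewrite derivM !deriv_exp !succnK [Bp ^+ (2 * n.+1).+1]exprS [Ap ^+ n.+2]exprS [Ap ^+ n.+1]exprS.
  rewrite /Ap /Bp /lr /mr !derivE; ring.
have := congr1 (fun p : {poly rat} => p`_n.+1) key.
rewrite /= coefB !coefD !coefCM coefXderiv ZY coefD coefCM => h.
apply: (fin2 _ _ _ _ h).
- by rewrite pnatr_eq0.
- by rewrite pnatr_eq0.
- by rewrite -addn1 natrD.
- by rewrite -mulnA natrM.
Qed.
End Exp.


Section F.
Variables l m : nat.

Lemma fL_formula n : (0 < n)%N -> fL l m n =
  \sum_(0 <= k < n) (1 / n%:R) * ('C(n, k) * 'C(2 * n - 2, n - k - 1) * l ^ (n - k - 1) * m ^ k)%N%:R.
Proof.
case: n => // n _.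
rewrite (@fL_ct l m n.+2) //.
case: n => [|n].
  rewrite !ct0 big_nat1 /= mulr0 mulr0 !addr0.
  by rewrite divr1 mul1r invr1.
rewrite -addrA fZ (_ : (n.+1 == 0)%:R = 0) // add0r coefAB big_mkord big_distrr /=.
apply: eq_bigr => i _; have := ltn_ord i => iN.
rewrite (_ : (2 * n.+2 - 2 = 2 * n.+1)%N); last lia.
rewrite (_ : (n.+2 - i - 1 = n.+1 - i)%N); last lia.
rewrite !natrM !natrX /lr /mr; ring.
Qed.

Lemma fM_formula n : (1 < n)%N -> fM l m n =
  \sum_(1 <= k < n) (1 / (n - 1)%N%:R) *
     ('C(n - 1, k - 1) * 'C(2 * n - 2, n - k - 1) * l ^ (n - k) * m ^ (k - 1))%N%:R.
Proof.
case: n => [|[|n]] // _.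
rewrite (@fM_ct l m n.+3) // ct1 coefAB add0r big_add1 big_mkord /= big_distrr /= big_distrr /=.
apply: eq_bigr => i _; have := ltn_ord i => iN.
rewrite (_ : (n.+2 - 1 = n.+1)%N); last lia.
rewrite (_ : (2 * n.+2 - 2 = 2 * n.+1)%N); last lia.
rewrite (_ : (n.+2 - i.+1 - 1 = n - i)%N); last lia.
rewrite (_ : (n.+2 - i.+1 = (n - i).+1)%N); last lia.
rewrite (_ : (i.+1 - 1 = i)%N); last lia.
rewrite !natrM !natrX exprS /lr /mr; ring.
Qed.
End F.

Section T.
Variables l m : nat.

Lemma fin4 (Lr Mr c c1 X Y lp mp N1 N2 J1 : rat) : N1 != 0 -> N2 != 0 -> N2 = N1 + 1 ->
  N2 * c1 = J1 * c -> (2 * N1) * Y = (N2 + J1 - 1) * X ->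
  Lr * (1 / N2 * (c * X * lp * (Mr * mp))) + Mr * (1 / N1 * (c1 * X * (Lr * lp) * mp)) =
  2 / N2 * (c * Y * (Lr * lp) * (Mr * mp)).
Proof.
move=> h1 h2 e2 ha hb.
have ec1 : c1 = J1 * c / N2 by apply: (mulfI h2); rewrite ha; field.
have eY : Y = (N2 + J1 - 1) * X / (2 * N1).
  have h3 : 2 * N1 != 0 by rewrite mulf_neq0 // pnatr_eq0.
  by apply: (mulfI h3); rewrite hb; field.
rewrite ec1 eY e2; field; rewrite -?e2 ?h1 ?h2 //.
Qed.

Lemma total_formula n : (1 < n)%N ->
  l%:R * fL l m n + m%:R * fM l m n =
  \sum_(0 <= k < n) (2%:R / n%:R) * ('C(n, k) * 'C(2 * n - 3, n - k - 1) * l ^ (n - k) * m ^ k)%N%:R.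
Proof.
case: n => [|[|n]] // _.
rewrite fL_formula // fM_formula // (big_ltn (m := 0%N)) // [in RHS](big_ltn (m := 0%N)) // mulrDr -addrA.
congr (_ + _).
  rewrite (_ : (2 * n.+2 - 2 = (2 * n).+2)%N); last lia.
  rewrite (_ : (2 * n.+2 - 3 = (2 * n).+1)%N); last lia.
  rewrite (_ : (n.+2 - 0 - 1 = n.+1)%N); last lia.
  rewrite subn0.
  have hX : 'C((2 * n).+2, n.+1) = (2 * 'C((2 * n).+1, n.+1))%N.
    have := mul_bin_down (2 * n).+2 n.+1.
    rewrite (_ : ((2 * n).+2 - n.+1 = n.+1)%N); last lia.
    move=> h; apply/eqP; rewrite -(@eqn_pmul2l n.+1) // -h succnK; apply/eqP; nia.
  rewrite hX bin0 expn0 !natrM !natrX exprS; field; by rewrite -natrD pnatr_eq0.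
rewrite !big_distrr -big_split /=; apply: eq_big_nat => k /andP[k1 kn].
case: k k1 kn => // j _ jn.
have jn' : (j <= n)%N by lia.
rewrite (_ : (2 * n.+2 - 2 = (2 * n).+2)%N); last lia.
rewrite (_ : (2 * n.+2 - 3 = (2 * n).+1)%N); last lia.
rewrite (_ : (n.+2 - j.+1 - 1 = n - j)%N); last lia.
rewrite (_ : (n.+2 - 1 = n.+1)%N); last lia.
rewrite (_ : (j.+1 - 1 = j)%N); last lia.
rewrite (_ : (n.+2 - j.+1 = (n - j).+1)%N); last lia.
rewrite !natrM !natrX !exprS.
apply: (@fin4 _ _ _ _ _ _ _ _ _ _ j.+1%:R).
- by rewrite pnatr_eq0.
- by rewrite pnatr_eq0.
- by rewrite -addn1 natrD.
- by rewrite -!natrM mul_bin_diag.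
- transitivity (((2 * n).+2 * 'C((2 * n).+1, n - j))%N%:R : rat).
    by rewrite natrM (_ : (2 * n).+2 = 2 * n.+1)%N ?natrM //; lia.
  rewrite (mul_bin_down (2 * n).+2 (n - j)) natrM.
  rewrite (_ : ((2 * n).+2 - (n - j) = n.+2 + j)%N); last lia.
  by rewrite natrD -addn1 natrD; congr (_ * _); ring.
Qed.
End T.


Lemma In_mem (T : eqType) (x : T) (s : seq T) : List.In x s <-> x \in s.
Proof.
elim: s => [|y s IH] /=; first by split.
rewrite inE; split.
- by case=> [->|/IH ->]; rewrite ?eqxx ?orbT.
- by case/orP => [/eqP ->|/IH]; [left|right].
Qed.

Lemma uniq_NoDup (T : eqType) (s : seq T) : uniq s -> List.NoDup s.
Proof.
elim: s => [|x s IH] /=; first by constructor.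
case/andP => xs us; constructor; last exact: IH.
by move/In_mem; rewrite (negbTE xs).
Qed.

Lemma card_of (T : eqType) (P : T -> Prop) (s : seq T) :
  uniq s -> (forall x, x \in s <-> P x) -> card_is P (size s)%:R.
Proof.
move=> us hs; exists s; split; first exact: uniq_NoDup.
split=> // x; rewrite In_mem; exact: hs.
Qed.

Lemma tAi_L l m n (i : 'I_(l + m)) : (i < l)%N -> (0 < n)%N ->
  tAi_is (Alm l m) i n (fL l m n).
Proof.
move=> il n0; rewrite /fL -il -(size_TF l m (2 * n)).1.
apply: card_of; first exact: (uniqTF _ _).1.
move=> t; split.
- by move/((sound _ _).1) => /and3P[/eqP -> -> /eqP ->].
- case=> sz va rt; apply: (complete _ _).1 => //.
  by rewrite /okT sz va rt !eqxx.
Qed.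

Lemma tAi_M l m n (i : 'I_(l + m)) : (l <= i)%N -> (0 < n)%N ->
  tAi_is (Alm l m) i n (fM l m n).
Proof.
move=> il n0; rewrite /fM (_ : false = (i < l)%N); last by rewrite ltnNge il.
rewrite -(size_TF l m (2 * n)).1.
apply: card_of; first exact: (uniqTF _ _).1.
move=> t; split.
- by move/((sound _ _).1) => /and3P[/eqP -> -> /eqP ->].
- case=> sz va rt; apply: (complete _ _).1 => //.
  by rewrite /okT sz va rt !eqxx.
Qed.

Lemma tA_all l m n : (0 < l)%N -> (0 < n)%N ->
  tA_is (Alm l m) n (l%:R * fL l m n + m%:R * fM l m n).
Proof.
move=> l0 n0.
set s := flatten [seq trees (Alm l m) (2 * n) n c | c <- enum 'I_(l + m)].
have -> : l%:R * fL l m n + m%:R * fM l m n = (size s)%:R :> rat.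
  rewrite /s size_flatten /shape -map_comp sumnE big_map big_enum /=.
  pose c0 : 'I_(l + m) := Ordinal (ltn_addr m l0).
  rewrite (eq_bigr (fun c : 'I_(l + m) => cT l m (2 * n) n (c < l)%N)); last first.
    by move=> c _; rewrite (size_TF l m (2 * n)).1.
  rewrite (eq_bigl (fun c' => Alm l m c0 c')); last first.
    move=> c'; rewrite mxE /= (_ : (l <= 0)%N = false) //.
    by apply/negbTE; rewrite -ltnNge.
  rewrite (@Alm_sum l m c0 (fun b => cT l m (2 * n) n b)) /= l0.
  by rewrite natrD !natrM /fL /fM.
apply: card_of.
- apply: uniq_flatten_map; first exact: enum_uniq.
  + by move=> c _; exact: (uniqTF _ _).1.
  + move=> c1 c2 t _ _ /((sound _ _).1) /and3P[_ _ /eqP <-].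
    by move/((sound _ _).1) => /and3P[_ _ /eqP <-].
- move=> t; split.
  + by move/flatten_mapP => [c _ /((sound _ _).1) /and3P[/eqP -> -> _]].
  + case=> sz va; apply/flatten_mapP; exists (root_color t); first by rewrite mem_enum.
    by apply: (complete _ _).1 => //; rewrite /okT sz va !eqxx.
Qed.

Theorem theorem33 (l m n : nat) :
  (0 < l)%N -> (0 < m)%N -> (0 < n)%N ->
  [/\ (2 <= n)%N ->
        tA_is (Alm l m) n
          (\sum_(0 <= k < n)
              (2%:R / n%:R) *
              ('C(n, k) * 'C(2 * n - 3, n - k - 1) * l ^ (n - k) * m ^ k)%N%:R),
      (forall i : 'I_(l + m), (i < l)%N ->
        tAi_is (Alm l m) i n
          (\sum_(0 <= k < n)
              (1 / n%:R) *
              ('C(n, k) * 'C(2 * n - 2, n - k - 1) * l ^ (n - k - 1) * m ^ k)%N%:R))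
    & (2 <= n)%N -> forall i : 'I_(l + m), (l <= i)%N ->
        tAi_is (Alm l m) i n
          (\sum_(1 <= k < n)
              (1 / (n - 1)%N%:R) *
              ('C(n - 1, k - 1) * 'C(2 * n - 2, n - k - 1) * l ^ (n - k)
                 * m ^ (k - 1))%N%:R)].
Proof.
move=> l0 m0 n0; split.
- move=> n2; have h := tA_all m l0 n0; rewrite total_formula // in h; exact: h.
- move=> i il; have h := tAi_L il n0; rewrite fL_formula // in h; exact: h.
- move=> n2 i il; have h := tAi_M il n0; rewrite fM_formula // in h; exact: h.
Qed.
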